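(* There exists a constant $C>0$ such that for all integers $n\ge2$, $g\ge1$ with $\theta:=g/n\ge x^{-2/3}$, where $x:=n+g$, \[\Big|\alpha(n,g)-4\lambda(\theta)-\frac{4\lambda(\theta)}{n}\Big(\frac12-\theta+\frac{\theta^2}{2}f''(\theta)+\theta j'(\theta)\Big)\Big|\le \frac{C}{x^2}.\]
   Context: Define $\lambda:[0,\infty)\to(0,1/4]$ by $\lambda(0)=1/4$ and, for $\theta>0$, $\lambda(\theta)$ is the unique $\lambda\in(0,1/4)$ with $-1+\frac{\operatorname{artanh}(\sqrt{1-4\lambda})}{\sqrt{1-4\lambda}}=\theta$. For $\theta>0$ set $f(\theta)=-\ln\lambda(\theta)-2\theta-\theta\ln(1-4\lambda(\theta))$ and $j(\theta)=-\tfrac12\ln(1-4(\theta+1)\lambda(\theta))+\tfrac12\ln 2$. For integers $n\ge1$, $g\ge1$ let \[\Omega(n,g)=\frac{\sqrt g\,g^g}{\sqrt{2\pi}\,e^g\,g!}\,n^{2g-2}\exp\!\Big(nf\big(\tfrac gn\big)+j\big(\tfrac gn\big)\Big),\] and for $n\ge2$, $g\ge1$ let $\alpha(n,g)=\frac{2(2n-1)}{n+1}\frac{\Omega(n-1,g)}{\Omega(n,g)}$. *)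

(* Defs.v *)
From Stdlib Require Import Reals ClassicalEpsilon.
From Coquelicot Require Import Coquelicot.
Open Scope R_scope.

Definition artanh (y : R) : R := / 2 * ln ((1 + y) / (1 - y)).

Definition lam_spec (th l : R) : Prop :=
  (th = 0 /\ l = / 4) \/
  (0 < th /\ 0 < l < / 4 /\
   -1 + artanh (sqrt (1 - 4 * l)) / sqrt (1 - 4 * l) = th).

Definition lam (th : R) : R := epsilon (inhabits 0) (lam_spec th).

Definition fF (th : R) : R :=
  - ln (lam th) - 2 * th - th * ln (1 - 4 * lam th).

Definition jF (th : R) : R :=
  - / 2 * ln (1 - 4 * (th + 1) * lam th) + / 2 * ln 2.

Definition Omega (n g : nat) : R :=
  sqrt (INR g) * INR g ^ g / (sqrt (2 * PI) * exp (INR g) * INR (Stdlib.Arith.Factorial.fact g))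
  * INR n ^ (2 * g - 2)
  * exp (INR n * fF (INR g / INR n) + jF (INR g / INR n)).

Definition alpha (n g : nat) : R :=
  2 * (2 * INR n - 1) / (INR n + 1) * (Omega (n - 1) g / Omega n g).

(* Main.v *)
Require Import Defs.
From Stdlib Require Import Reals Lra Psatz ClassicalEpsilon Ranalysis5.
From Coquelicot Require Import Coquelicot.
Open Scope R_scope.

Lemma exp_neg_inv x : exp (- x) = / exp x.
Proof. apply exp_Ropp. Qed.

Lemma ch_sh x : cosh x ^ 2 - sinh x ^ 2 = 1.
Proof.
  unfold cosh, sinh. rewrite exp_neg_inv.
  assert (exp x <> 0) by (apply Rgt_not_eq, exp_pos). field; auto.
Qed.

Lemma ch_p_sh x : cosh x + sinh x = exp x.
Proof. unfold cosh, sinh. field. Qed.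

Lemma ch_m_sh x : cosh x - sinh x = exp (- x).
Proof. unfold cosh, sinh. field. Qed.

Lemma is_derive_sinh x : is_derive sinh x (cosh x).
Proof. unfold sinh, cosh. auto_derive; auto. field. Qed.

Lemma is_derive_cosh x : is_derive cosh x (sinh x).
Proof. unfold sinh, cosh. auto_derive; auto. field. Qed.

Lemma cosh_gt1 x : x <> 0 -> 1 < cosh x.
Proof.
  intro H. unfold cosh.
  pose proof (exp_ineq1 x H). assert (- x <> 0) by lra.
  pose proof (exp_ineq1 (-x) H1). lra.
Qed.

Lemma cosh_ge1 x : 1 <= cosh x.
Proof.
  destruct (Req_dec x 0) as [->|H].
  - unfold cosh. rewrite Ropp_0, exp_0. lra.
  - left; now apply cosh_gt1.
Qed.

Lemma sinh_pos x : 0 < x -> 0 < sinh x.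
Proof.
  intro H. unfold sinh. assert (exp (-x) < exp x) by (apply exp_increasing; lra). lra.
Qed.

Lemma sinh_0 : sinh 0 = 0.
Proof. unfold sinh. rewrite Ropp_0. lra. Qed.
Lemma cosh_0 : cosh 0 = 1.
Proof. unfold cosh. rewrite Ropp_0, exp_0. lra. Qed.

Lemma is_derive_cont_pt f x l : is_derive f x l -> continuity_pt f x.
Proof. intro H. apply is_derive_Reals in H. apply derivable_continuous_pt. exists l. exact H. Qed.

Lemma incr_of_deriv (h dh : R -> R) a b : a < b ->
  (forall x, a <= x <= b -> is_derive h x (dh x)) ->
  (forall x, a <= x <= b -> 0 < dh x) -> h a < h b.
Proof.
  intros Hab Hd Hp.
  destruct (MVT_gen h a b dh) as [c [Hc Heq]].
  - intros x Hx. apply Hd. rewrite Rmin_left, Rmax_right in Hx; lra.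
  - intros x Hx. rewrite Rmin_left, Rmax_right in Hx by lra.
    eapply is_derive_cont_pt. apply Hd; lra.
  - rewrite Rmin_left, Rmax_right in Hc by lra.
    pose proof (Hp c Hc). nra.
Qed.

Lemma nondecr_of_deriv (h dh : R -> R) a b : a <= b ->
  (forall x, a <= x <= b -> is_derive h x (dh x)) ->
  (forall x, a <= x <= b -> 0 <= dh x) -> h a <= h b.
Proof.
  intros Hab Hd Hp.
  destruct (Req_dec a b) as [->|Hne]; [lra|].
  destruct (MVT_gen h a b dh) as [c [Hc Heq]].
  - intros x Hx. apply Hd. rewrite Rmin_left, Rmax_right in Hx; lra.
  - intros x Hx. rewrite Rmin_left, Rmax_right in Hx by lra.
    eapply is_derive_cont_pt. apply Hd; lra.
  - rewrite Rmin_left, Rmax_right in Hc by lra.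
    pose proof (Hp c Hc). nra.
Qed.

Lemma pos_of_deriv (h dh : R -> R) u : 0 < u -> h 0 = 0 ->
  (forall x, 0 <= x -> is_derive h x (dh x)) ->
  (forall x, 0 <= x -> 0 <= dh x) -> (forall x, 0 < x -> 0 < dh x) -> 0 < h u.
Proof.
  intros Hu H0 Hd Hnn Hp.
  assert (h 0 <= h (u/2)).
  { apply (nondecr_of_deriv h dh); [lra| intros; apply Hd; lra | intros; apply Hnn; lra]. }
  assert (h (u/2) < h u).
  { apply (incr_of_deriv h dh); [lra| intros; apply Hd; lra | intros; apply Hp; lra]. }
  lra.
Qed.

Lemma sinh_gt x : 0 < x -> x < sinh x.
Proof.
  intro Hx.
  enough (0 < sinh x - x) by lra.
  apply (pos_of_deriv (fun y => sinh y - y) (fun y => cosh y - 1) x Hx).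
  - rewrite sinh_0. lra.
  - intros. unfold sinh, cosh. auto_derive; auto. field.
  - intros. pose proof (cosh_ge1 x0). lra.
  - intros. pose proof (cosh_gt1 x0). lra.
Qed.

Section ShPow.
Variable u : R.
Let s := sinh u.
Let c := cosh u.
Lemma shp2 : sinh u ^ 2 = cosh u ^ 2 - 1. Proof. pose proof (ch_sh u). lra. Qed.
Lemma shp3 : sinh u ^ 3 = sinh u * (cosh u ^ 2 - 1). Proof. rewrite <- shp2. ring. Qed.
Lemma shp4 : sinh u ^ 4 = (cosh u ^ 2 - 1)^2. Proof. rewrite <- shp2. ring. Qed.
Lemma shp5 : sinh u ^ 5 = sinh u * (cosh u ^ 2 - 1)^2. Proof. rewrite <- shp2. ring. Qed.
Lemma shp6 : sinh u ^ 6 = (cosh u ^ 2 - 1)^3. Proof. rewrite <- shp2. ring. Qed.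
Lemma shp7 : sinh u ^ 7 = sinh u * (cosh u ^ 2 - 1)^3. Proof. rewrite <- shp2. ring. Qed.
Lemma shp8 : sinh u ^ 8 = (cosh u ^ 2 - 1)^4. Proof. rewrite <- shp2. ring. Qed.
Lemma shp9 : sinh u ^ 9 = sinh u * (cosh u ^ 2 - 1)^4. Proof. rewrite <- shp2. ring. Qed.
Lemma shp10 : sinh u ^ 10 = (cosh u ^ 2 - 1)^5. Proof. rewrite <- shp2. ring. Qed.
Lemma shp11 : sinh u ^ 11 = sinh u * (cosh u ^ 2 - 1)^5. Proof. rewrite <- shp2. ring. Qed.
Lemma shp12 : sinh u ^ 12 = (cosh u ^ 2 - 1)^6. Proof. rewrite <- shp2. ring. Qed.
Lemma shp13 : sinh u ^ 13 = sinh u * (cosh u ^ 2 - 1)^6. Proof. rewrite <- shp2. ring. Qed.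
Lemma shp14 : sinh u ^ 14 = (cosh u ^ 2 - 1)^7. Proof. rewrite <- shp2. ring. Qed.
End ShPow.

Ltac hyp_ring u :=
  ring_simplify;
  rewrite ?(shp14 u), ?(shp13 u), ?(shp12 u), ?(shp11 u), ?(shp10 u), ?(shp9 u), ?(shp8 u),
    ?(shp7 u), ?(shp6 u), ?(shp5 u), ?(shp4 u), ?(shp3 u), ?(shp2 u); ring.

Ltac posprod := repeat (first [lra | apply Rmult_lt_0_compat | apply Rinv_0_lt_compat | apply pow_lt]); try nra.
Ltac nz := solve [apply Rgt_not_eq, Rlt_gt; posprod].

Lemma P_pos u : 0 < u -> sinh u < u * cosh u.
Proof.
  intro Hu. enough (0 < u * cosh u - sinh u) by lra.
  apply (pos_of_deriv (fun y => y * cosh y - sinh y) (fun y => y * sinh y) u Hu).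
  - rewrite sinh_0. lra.
  - intros. unfold sinh, cosh. auto_derive; auto. field.
  - intros. destruct H as [H|H]; [|subst; rewrite sinh_0; lra].
    pose proof (sinh_pos x H). nra.
  - intros. pose proof (sinh_pos x H). nra.
Qed.

Lemma sh_lt_ch u : sinh u < cosh u.
Proof. pose proof (ch_m_sh u). pose proof (exp_pos (-u)). lra. Qed.

Definition th_of (u : R) : R := u * cosh u / sinh u - 1.

Lemma D_pos u : 0 < u -> u < sinh u * cosh u.
Proof.
  intro Hu. pose proof (sinh_gt u Hu). pose proof (cosh_gt1 u ltac:(lra)). nra.
Qed.

Lemma Dsinh x : Derive sinh x = cosh x.
Proof. apply is_derive_unique, is_derive_sinh. Qed.
Lemma Dcosh x : Derive cosh x = sinh x.
Proof. apply is_derive_unique, is_derive_cosh. Qed.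
Lemma exsinh x : ex_derive sinh x.
Proof. eexists; apply is_derive_sinh. Qed.
Lemma excosh x : ex_derive cosh x.
Proof. eexists; apply is_derive_cosh. Qed.
#[global] Hint Resolve exsinh excosh : core.

Lemma th_of_deriv u : 0 < u ->
  is_derive th_of u ((sinh u * cosh u - u) / sinh u ^ 2).
Proof.
  intro Hu. pose proof (sinh_pos u Hu). unfold th_of.
  auto_derive.
  - repeat split; auto. lra.
  - pose proof (ch_sh u). field_simplify_eq; [nra|lra].
Qed.

Lemma th_of_incr a b : 0 < a -> a < b -> th_of a < th_of b.
Proof.
  intros Ha Hab.
  apply (incr_of_deriv th_of (fun u => (sinh u * cosh u - u) / sinh u ^ 2)); auto.
  - intros x Hx. apply th_of_deriv. lra.
  - intros x Hx. pose proof (D_pos x ltac:(lra)). pose proof (sinh_pos x ltac:(lra)).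
    apply Rdiv_lt_0_compat; [lra|]. nra.
Qed.

Lemma th_of_inj a b : 0 < a -> 0 < b -> th_of a = th_of b -> a = b.
Proof.
  intros Ha Hb H. destruct (Rtotal_order a b) as [h|[h|h]]; auto.
  - pose proof (th_of_incr a b Ha h). lra.
  - pose proof (th_of_incr b a Hb h). lra.
Qed.

Lemma th_of_pos u : 0 < u -> 0 < th_of u.
Proof.
  intro Hu. unfold th_of. pose proof (P_pos u Hu). pose proof (sinh_pos u Hu).
  apply Rlt_Rminus. apply (Rmult_lt_reg_r (sinh u)); auto.
  unfold Rdiv. rewrite Rmult_assoc, Rinv_l; lra.
Qed.

Lemma th_of_le u : 0 < u -> th_of u <= u.
Proof.
  intro Hu. unfold th_of. pose proof (sinh_gt u Hu). pose proof (sinh_pos u Hu).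
  pose proof (ch_m_sh u). pose proof (exp_pos (-u)).
  assert (exp (-u) <= 1). { rewrite <- exp_0. apply Rlt_le, exp_increasing; lra. }
  assert (u * cosh u <= (u + 1) * sinh u) by nra.
  apply (Rmult_le_reg_r (sinh u)); auto.
  unfold Rdiv. replace ((u * cosh u * / sinh u - 1) * sinh u) with (u * cosh u - sinh u)
    by (field; lra). nra.
Qed.

Lemma th_of_ge u : 0 < u -> u - 1 <= th_of u.
Proof.
  intro Hu. unfold th_of. pose proof (sh_lt_ch u). pose proof (sinh_pos u Hu).
  apply (Rmult_le_reg_r (sinh u)); auto.
  unfold Rdiv. replace ((u * cosh u * / sinh u - 1) * sinh u) with (u * cosh u - sinh u)
    by (field; lra). nra.
Qed.

Lemma th_of_surj t : 0 < t -> exists u, 0 < u /\ th_of u = t.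
Proof.
  intro Ht.
  destruct (IVT_interv (fun u => th_of u - t) (t/2) (t+2)) as [z [Hz Hz0]].
  - intros a Ha. apply continuity_pt_minus; [|apply continuity_pt_const; intros ?; auto].
    eapply is_derive_cont_pt. apply th_of_deriv. lra.
  - lra.
  - pose proof (th_of_le (t/2) ltac:(lra)). lra.
  - pose proof (th_of_ge (t+2) ltac:(lra)). lra.
  - exists z. split; lra.
Qed.

Lemma artanh_tanh u : artanh (sinh u / cosh u) = u.
Proof.
  unfold artanh. pose proof (sh_lt_ch u). pose proof (cosh_ge1 u).
  replace ((1 + sinh u / cosh u) / (1 - sinh u / cosh u)) with
    ((cosh u + sinh u) / (cosh u - sinh u)) by (field; split; lra).
  rewrite ch_p_sh, ch_m_sh. unfold Rdiv. rewrite exp_neg_inv, Rinv_inv.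
  rewrite <- exp_plus, ln_exp. field.
Qed.

Lemma sqrt_lam_u u : 0 < u -> sqrt (1 - 4 * / (4 * cosh u ^ 2)) = sinh u / cosh u.
Proof.
  intro Hu. pose proof (cosh_ge1 u). pose proof (sinh_pos u Hu). pose proof (ch_sh u).
  replace (1 - 4 * / (4 * cosh u ^ 2)) with ((sinh u / cosh u)^2).
  - apply sqrt_pow2. apply Rlt_le, Rdiv_lt_0_compat; lra.
  - field_simplify_eq; [nra | lra].
Qed.

Lemma lam_spec_u u : 0 < u -> lam_spec (th_of u) (/ (4 * cosh u ^ 2)).
Proof.
  intro Hu. right. pose proof (cosh_gt1 u ltac:(lra)). pose proof (sinh_pos u Hu).
  split; [apply th_of_pos; auto|]. split.
  - split. apply Rinv_0_lt_compat; nra.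
    rewrite <- (Rinv_inv 4) at 2. apply Rinv_lt_contravar; nra.
  - rewrite sqrt_lam_u, artanh_tanh by auto. unfold th_of. field. lra.
Qed.

Lemma tanh_artanh y : 0 < y < 1 -> 0 < artanh y /\ sinh (artanh y) / cosh (artanh y) = y.
Proof.
  intro Hy. unfold artanh.
  set (w := (1 + y) / (1 - y)).
  assert (Hw : 1 < w). { unfold w. apply (Rmult_lt_reg_r (1 - y)); [lra|].
     unfold Rdiv. rewrite Rmult_assoc, Rinv_l; lra. }
  split.
  - assert (0 < ln w) by (rewrite <- ln_1; apply ln_increasing; lra). lra.
  - unfold sinh, cosh. rewrite exp_neg_inv.
    assert (E : exp (/ 2 * ln w) * exp (/ 2 * ln w) = w).
    { rewrite <- exp_plus. replace (/ 2 * ln w + / 2 * ln w) with (ln w) by field.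
      apply exp_ln. lra. }
    pose proof (exp_pos (/ 2 * ln w)).
    set (e := exp (/ 2 * ln w)) in *.
    replace ((e - / e) / 2 / ((e + / e) / 2)) with ((e * e - 1) / (e * e + 1)) by (field; split; nra).
    rewrite E. unfold w. field. split; lra.
Qed.

Lemma lam_spec_exists t : 0 < t -> exists l, lam_spec t l.
Proof.
  intro Ht. destruct (th_of_surj t Ht) as [u [Hu Hut]].
  exists (/ (4 * cosh u ^ 2)). rewrite <- Hut. apply lam_spec_u; auto.
Qed.

Definition U (t : R) : R := artanh (sqrt (1 - 4 * lam t)).

Lemma U_prop t : 0 < t ->
  0 < U t /\ th_of (U t) = t /\ lam t = / (4 * cosh (U t) ^ 2).
Proof.
  intro Ht.
  assert (Hs : lam_spec t (lam t)).
  { unfold lam. apply epsilon_spec. destruct (lam_spec_exists t Ht) as [l Hl]. exists l; auto. }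
  destruct Hs as [[H0 _]|[_ [[Hl1 Hl2] Heq]]]; [lra|].
  unfold U.
  set (y := sqrt (1 - 4 * lam t)) in *.
  assert (Hy2 : y ^ 2 = 1 - 4 * lam t). { unfold y. rewrite <- Rsqr_pow2. apply Rsqr_sqrt. lra. }
  assert (Hy0 : 0 < y). { unfold y. apply sqrt_lt_R0; lra. }
  assert (Hy : 0 < y < 1). { split; auto. nra. }
  destruct (tanh_artanh y Hy) as [Hv Htv].
  set (v := artanh y) in *.
  pose proof (cosh_ge1 v). pose proof (sinh_pos v Hv). pose proof (ch_sh v).
  split; [exact Hv|]. split.
  - unfold th_of. rewrite <- Heq. rewrite <- Htv. field. split; lra.
  - rewrite <- Htv in Hy2.
    assert (lam t = (1 - (sinh v / cosh v)^2) / 4) by lra.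
    rewrite H2. field_simplify_eq; [nra|lra].
Qed.

Lemma U_le a b : 0 < a -> a <= b -> U a <= U b.
Proof.
  intros Ha Hab. destruct (U_prop a Ha) as [Ua [Ta _]]. destruct (U_prop b ltac:(lra)) as [Ub [Tb _]].
  destruct (Rle_dec (U a) (U b)) as [h|h]; auto.
  pose proof (th_of_incr (U b) (U a) Ub ltac:(lra)). lra.
Qed.

Lemma U_th_of u : 0 < u -> U (th_of u) = u.
Proof.
  intro Hu. pose proof (th_of_pos u Hu). destruct (U_prop _ H) as [H1 [H2 _]].
  apply th_of_inj; auto.
Qed.

Definition dU (u : R) : R := sinh u ^ 2 / (sinh u * cosh u - u).

Lemma U_deriv t : 0 < t -> is_derive U t (dU (U t)).
Proof.
  intro Ht.
  set (lb := t / 2). set (ub := 2 * t).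
  assert (Hlb : 0 < lb) by (unfold lb; lra).
  assert (HUlb : 0 < U lb) by (apply U_prop; auto).
  assert (Hub : 0 < ub) by (unfold ub; lra).
  assert (Prf : forall a, U lb <= a <= U ub -> derivable_pt th_of a).
  { intros a Ha. exists ((sinh a * cosh a - a) / sinh a ^ 2).
    apply is_derive_Reals, th_of_deriv. lra. }
  assert (Hinv : forall x, lb <= x <= ub -> comp th_of U x = id x).
  { intros x Hx. unfold comp, id. apply U_prop. lra. }
  assert (Hcont : continuity_pt U t).
  { apply (continuity_pt_recip_interv th_of U (U lb) (U ub)).
    - pose proof (U_le lb ub Hlb ltac:(unfold lb, ub; lra)).
      destruct H as [H|H]; auto.
      assert (th_of (U lb) = th_of (U ub)) by (rewrite H; auto).
      rewrite (proj1 (proj2 (U_prop lb Hlb))), (proj1 (proj2 (U_prop ub Hub))) in H0.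
      unfold lb, ub in H0; lra.
    - intros x y Hx Hxy Hy. apply th_of_incr; lra.
    - intros x Hx Hy. unfold comp, id. apply U_prop.
      rewrite (proj1 (proj2 (U_prop lb Hlb))) in Hx. lra.
    - intros x Hx Hy. rewrite (proj1 (proj2 (U_prop lb Hlb))) in Hx.
      rewrite (proj1 (proj2 (U_prop ub Hub))) in Hy.
      split; apply U_le; lra.
    - intros a Ha. eapply is_derive_cont_pt. apply th_of_deriv. lra.
    - rewrite (proj1 (proj2 (U_prop lb Hlb))), (proj1 (proj2 (U_prop ub Hub))).
      unfold lb, ub; lra. }
  assert (Hincr : U lb <= U t <= U ub).
  { split; apply U_le; unfold lb, ub; lra. }
  pose proof (derivable_pt_lim_recip_interv th_of U lb ub t Prf Hcont
     ltac:(unfold lb, ub; lra) ltac:(unfold lb, ub; lra) Hincr Hinv) as Hd.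
  assert (HUt : 0 < U t) by (apply U_prop; auto).
  assert (Hder : derive_pt th_of (U t) (Prf (U t) Hincr) = (sinh (U t) * cosh (U t) - U t) / sinh (U t) ^ 2).
  { apply derive_pt_eq_0. apply is_derive_Reals, th_of_deriv. auto. }
  rewrite Hder in Hd.
  pose proof (D_pos (U t) HUt). pose proof (sinh_pos (U t) HUt).
  apply is_derive_Reals.
  replace (dU (U t)) with (1 / ((sinh (U t) * cosh (U t) - U t) / sinh (U t) ^ 2)).
  - apply Hd. apply Rgt_not_eq, Rdiv_lt_0_compat; nra.
  - unfold dU. field. split; nra.
Qed.

Lemma loc_pos t : 0 < t -> locally t (fun y => 0 < y).
Proof.
  intro Ht. exists (mkposreal t Ht). intros y Hy. 
  change (Rabs (y - t) < t) in Hy. apply Rabs_def2 in Hy. lra.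
Qed.

Definition F1 (u : R) : R := - ln (1 - 4 * / (4 * cosh u ^ 2)).

Lemma fF_loc t : 0 < t -> locally t (fun y =>
   ln (4 * cosh (U y) ^ 2) - 2 * y - y * ln (1 - 4 * / (4 * cosh (U y) ^ 2)) = fF y).
Proof.
  intro Ht. apply filter_imp with (2 := loc_pos t Ht). intros y Hy.
  unfold fF. rewrite (proj2 (proj2 (U_prop y Hy))).
  pose proof (cosh_ge1 (U y)). rewrite ln_Rinv by nra. ring.
Qed.

Lemma dfF t : 0 < t -> is_derive fF t (F1 (U t)).
Proof.
  intro Ht. apply (is_derive_ext_loc _ _ _ _ (fF_loc t Ht)).
  destruct (U_prop t Ht) as [Hu [Hth _]].
  pose proof (U_deriv t Ht).
  auto_derive.
  - pose proof (cosh_gt1 (U t) ltac:(lra)).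
    repeat split; try (eexists; eauto; fail); try nra.
    apply Rlt_0_minus. apply (Rmult_lt_reg_r (4 * (cosh (U t) * (cosh (U t) * 1)))); [nra|].
    rewrite Rmult_assoc, Rinv_l by nra. nra.
  - replace (Derive (fun x => U x) t) with (dU (U t)) by (symmetry; apply is_derive_unique; auto).
    set (u := U t) in *. rewrite <- Hth.
    assert (HL : ln (1 + - (4 * / (4 * (cosh u * (cosh u * 1))))) = - F1 u).
    { unfold F1. rewrite Ropp_involutive. reflexivity. }
    rewrite HL. unfold th_of, dU.
    pose proof (cosh_ge1 u). pose proof (sinh_pos u Hu). pose proof (D_pos u Hu). pose proof (ch_sh u).
    field_simplify_eq. 2:{ repeat split; nra. }
    hyp_ring u.
Qed.

Lemma comp_U (F dF : R -> R) t : 0 < t -> (forall u, 0 < u -> is_derive F u (dF u)) ->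
  is_derive (fun y => F (U y)) t (dF (U t) * dU (U t)).
Proof.
  intros Ht HF. pose proof (U_deriv t Ht). pose proof (proj1 (U_prop t Ht)).
  pose proof (is_derive_comp F U t (dF (U t)) (dU (U t)) (HF _ H0) H).
  rewrite Rmult_comm. exact H1.
Qed.

Definition DD (u : R) : R := sinh u * cosh u - u.
Definition F2 (u : R) : R := - 2 * sinh u / (cosh u * DD u).
Definition F3 (u : R) : R :=
  2 * sinh u ^ 2 * (2 * sinh u ^ 3 * cosh u - DD u) / (cosh u ^ 2 * DD u ^ 3).
Definition QQ (u : R) : R := u * (cosh u ^ 2 + sinh u ^ 2) - sinh u * cosh u.
Definition J1 (u : R) : R := - QQ u * sinh u / (2 * cosh u * DD u ^ 2).
Definition J2 (u : R) : R :=
  - / 2 * (4 * u * sinh u ^ 2 / DD u ^ 2 + QQ u / (cosh u ^ 2 * DD u ^ 2)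
           - 4 * QQ u * sinh u ^ 3 / (cosh u * DD u ^ 3)) * (sinh u ^ 2 / DD u).

Ltac hyp_facts u Hu :=
  pose proof (cosh_gt1 u ltac:(lra)); pose proof (sinh_pos u Hu);
  pose proof (D_pos u Hu); pose proof (ch_sh u).

Lemma dF1 t : 0 < t -> is_derive (fun y => F1 (U y)) t (F2 (U t)).
Proof.
  intro Ht.
  assert (E : F2 (U t) = (- 2 / (cosh (U t) * sinh (U t))) * dU (U t)).
  { pose proof (proj1 (U_prop t Ht)) as Hu. set (u := U t) in *. hyp_facts u Hu.
    unfold F2, dU, DD. field. repeat split; nra. }
  rewrite E. apply (comp_U F1 (fun u => -2 / (cosh u * sinh u)) t Ht).
  intros u Hu. hyp_facts u Hu. unfold F1. auto_derive.
  - repeat split; try nra.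
    apply Rlt_0_minus. apply (Rmult_lt_reg_r (4 * (cosh u * (cosh u * 1)))); [nra|].
    rewrite Rmult_assoc, Rinv_l by nra. nra.
  - field_simplify_eq. hyp_ring u. repeat split; try nz; try nra.
Qed.

Lemma dF2 t : 0 < t -> is_derive (fun y => F2 (U y)) t (F3 (U t)).
Proof.
  intro Ht.
  set (dF := fun u => - 2 * ((cosh u * (cosh u * DD u) - sinh u * (sinh u * DD u + cosh u * (2 * sinh u ^ 2))))
                        / (cosh u * DD u) ^ 2).
  assert (E : F3 (U t) = dF (U t) * dU (U t)).
  { pose proof (proj1 (U_prop t Ht)) as Hu. set (u := U t) in *. hyp_facts u Hu.
    unfold F3, dF, dU, DD in *. field_simplify_eq. hyp_ring u. repeat split; nra. }
  rewrite E. apply (comp_U F2 dF t Ht).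
  intros u Hu. hyp_facts u Hu. unfold F2, dF, DD in *. auto_derive.
  - repeat split; nra.
  - field_simplify_eq. hyp_ring u. repeat split; try nz; try nra.
Qed.

Lemma jF_loc t : 0 < t -> locally t (fun y =>
   - / 2 * ln (1 - 4 * (y + 1) * / (4 * cosh (U y) ^ 2)) + / 2 * ln 2 = jF y).
Proof.
  intro Ht. apply filter_imp with (2 := loc_pos t Ht). intros y Hy.
  unfold jF. rewrite (proj2 (proj2 (U_prop y Hy))). reflexivity.
Qed.

Lemma djF t : 0 < t -> is_derive jF t (J1 (U t)).
Proof.
  intro Ht. apply (is_derive_ext_loc _ _ _ _ (jF_loc t Ht)).
  destruct (U_prop t Ht) as [Hu [Hth _]].
  pose proof (U_deriv t Ht).
  assert (Hpos : 0 < 1 - 4 * (t + 1) * / (4 * cosh (U t) ^ 2)).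
  { set (u := U t) in *. rewrite <- Hth. hyp_facts u Hu. unfold th_of.
    replace (1 - 4 * (u * cosh u / sinh u - 1 + 1) * / (4 * cosh u ^ 2))
      with (DD u / (sinh u * cosh u)) by (unfold DD; field; split; lra).
    apply Rdiv_lt_0_compat; unfold DD; nra. }
  auto_derive.
  - pose proof (cosh_ge1 (U t)). split; [eexists; eauto|]. split; [nra|]. split; [exact Hpos|exact I].
  - replace (Derive (fun x => U x) t) with (dU (U t)) by (symmetry; apply is_derive_unique; auto).
    set (u := U t) in *. rewrite <- Hth in *. hyp_facts u Hu.
    unfold th_of, dU, J1, QQ, DD in *.
    field_simplify_eq. hyp_ring u.
    repeat split; try nra.
Qed.

Lemma dJ1 t : 0 < t -> is_derive (fun y => J1 (U y)) t (J2 (U t)).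
Proof.
  intro Ht.
  set (dF := fun u => - / 2 * (4 * u * sinh u ^ 2 / DD u ^ 2 + QQ u / (cosh u ^ 2 * DD u ^ 2)
           - 4 * QQ u * sinh u ^ 3 / (cosh u * DD u ^ 3))).
  assert (E : J2 (U t) = dF (U t) * dU (U t)).
  { unfold J2, dF, dU. unfold DD. reflexivity. }
  rewrite E. apply (comp_U J1 dF t Ht).
  intros u Hu. hyp_facts u Hu. unfold J1, dF, QQ, DD in *. auto_derive.
  - repeat split; try nz; try nra.
  - field_simplify_eq. hyp_ring u. repeat split; try nz; try nra.
Qed.

Lemma fD1 t : 0 < t -> Derive_n fF 1 t = F1 (U t).
Proof. intro Ht. simpl. apply is_derive_unique, dfF; auto. Qed.

Lemma fD1_loc t : 0 < t -> locally t (fun y => F1 (U y) = Derive_n fF 1 y).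
Proof. intro Ht. apply filter_imp with (2 := loc_pos t Ht). intros y Hy. symmetry; apply fD1; auto. Qed.

Lemma fD2_is t : 0 < t -> is_derive (Derive_n fF 1) t (F2 (U t)).
Proof. intro Ht. apply (is_derive_ext_loc _ _ _ _ (fD1_loc t Ht)). apply dF1; auto. Qed.

Lemma fD2 t : 0 < t -> Derive_n fF 2 t = F2 (U t).
Proof. intro Ht. change (Derive (Derive_n fF 1) t = F2 (U t)). apply is_derive_unique, fD2_is; auto. Qed.

Lemma fD2_loc t : 0 < t -> locally t (fun y => F2 (U y) = Derive_n fF 2 y).
Proof. intro Ht. apply filter_imp with (2 := loc_pos t Ht). intros y Hy. symmetry; apply fD2; auto. Qed.

Lemma fD3_is t : 0 < t -> is_derive (Derive_n fF 2) t (F3 (U t)).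
Proof. intro Ht. apply (is_derive_ext_loc _ _ _ _ (fD2_loc t Ht)). apply dF2; auto. Qed.

Lemma fD3 t : 0 < t -> Derive_n fF 3 t = F3 (U t).
Proof. intro Ht. change (Derive (Derive_n fF 2) t = F3 (U t)). apply is_derive_unique, fD3_is; auto. Qed.

Lemma fF_exn t k : 0 < t -> (k <= 3)%nat -> ex_derive_n fF k t.
Proof.
  intros Ht Hk.
  destruct k as [|[|[|[|k]]]]; simpl.
  - exact I.
  - eexists. apply dfF; auto.
  - eexists. apply fD2_is; auto.
  - eexists. apply fD3_is; auto.
  - lia.
Qed.

Lemma jD1 t : 0 < t -> Derive_n jF 1 t = J1 (U t).
Proof. intro Ht. simpl. apply is_derive_unique, djF; auto. Qed.

Lemma jD1_loc t : 0 < t -> locally t (fun y => J1 (U y) = Derive_n jF 1 y).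
Proof. intro Ht. apply filter_imp with (2 := loc_pos t Ht). intros y Hy. symmetry; apply jD1; auto. Qed.

Lemma jD2_is t : 0 < t -> is_derive (Derive_n jF 1) t (J2 (U t)).
Proof. intro Ht. apply (is_derive_ext_loc _ _ _ _ (jD1_loc t Ht)). apply dJ1; auto. Qed.

Lemma jD2 t : 0 < t -> Derive_n jF 2 t = J2 (U t).
Proof. intro Ht. change (Derive (Derive_n jF 1) t = J2 (U t)). apply is_derive_unique, jD2_is; auto. Qed.

Lemma jF_exn t k : 0 < t -> (k <= 2)%nat -> ex_derive_n jF k t.
Proof.
  intros Ht Hk.
  destruct k as [|[|[|k]]]; simpl.
  - exact I.
  - eexists. apply djF; auto.
  - eexists. apply jD2_is; auto.
  - lia.
Qed.

Lemma QQ_pos u : 0 < u -> 0 < QQ u.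
Proof.
  intro Hu. unfold QQ.
  apply (pos_of_deriv (fun y => y * (cosh y ^ 2 + sinh y ^ 2) - sinh y * cosh y)
                      (fun y => 4 * y * sinh y * cosh y) u Hu).
  - rewrite sinh_0, cosh_0. ring.
  - intros. auto_derive; auto. pose proof (ch_sh x). field_simplify_eq. hyp_ring x.
  - intros. destruct H as [H|H]; [|subst; rewrite sinh_0; lra].
    pose proof (sinh_pos x H). pose proof (cosh_ge1 x). 
    apply Rlt_le. posprod.
  - intros. pose proof (sinh_pos x H). pose proof (cosh_ge1 x).
    posprod.
Qed.

Section Bounds.
Variable u : R.
Hypothesis Hu : 0 < u.

Let s := sinh u.
Let c := cosh u.
Let D := DD u.
Let P := u * cosh u - sinh u.

Lemma Hs : 0 < s. Proof. apply sinh_pos; auto. Qed.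
Lemma Hsu : u < s. Proof. apply sinh_gt; auto. Qed.
Lemma Hc : 1 < c. Proof. apply cosh_gt1; lra. Qed.
Lemma Hcs : c ^ 2 - s ^ 2 = 1. Proof. apply ch_sh. Qed.
Lemma HD : 0 < D. Proof. unfold D, DD. pose proof (D_pos u Hu). lra. Qed.
Lemma HP : 0 < P. Proof. unfold P. pose proof (P_pos u Hu). lra. Qed.
Lemma HPD : P <= D.
Proof. unfold P, D, DD. pose proof Hsu. pose proof Hc. fold s c. nra. Qed.
Lemma HPsc : P <= s * c.
Proof. unfold P. pose proof Hsu. pose proof Hc. pose proof Hs. fold s c. nra. Qed.
Lemma Hs3 : s ^ 3 <= 2 * c * D.
Proof.
  unfold D, DD. fold s c. pose proof Hsu. pose proof Hc. pose proof Hs. pose proof Hcs.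
  assert (s * (c ^ 2 + 1) >= 2 * u * c).
  { assert (c ^ 2 + 1 >= 2 * c) by nra. nra. }
  nra.
Qed.
Lemma Hth : th_of u = P / s.
Proof. unfold th_of, P. fold s c. pose proof Hs. field. lra. Qed.
Lemma Hth_le : P / s <= u.
Proof. rewrite <- Hth. apply th_of_le; auto. Qed.

Lemma Bf2 : th_of u ^ 2 * Rabs (F2 u) <= 2.
Proof.
  rewrite Hth. unfold F2. fold s c D.
  pose proof Hs; pose proof Hc; pose proof HD; pose proof HP; pose proof HPD; pose proof HPsc.
  rewrite Rabs_left.
  2: { assert (0 < 2 * s / (c * D)) by (apply Rdiv_lt_0_compat; nra).
       replace (-2 * s / (c * D)) with (- (2 * s / (c * D))) by (field; split; lra). lra. }
  replace ((P / s) ^ 2 * - (-2 * s / (c * D))) with (2 * (P * P) / (s * c * D)) by (field; repeat split; lra).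
  apply (Rmult_le_reg_r (s * c * D)). posprod.
  unfold Rdiv. rewrite Rmult_assoc, Rinv_l by nz.
  assert (P * P <= D * (s * c)) by (apply Rmult_le_compat; lra).
  nra.
Qed.

Lemma F2_neg : F2 u < 0.
Proof.
  unfold F2. fold s c D. pose proof Hs; pose proof Hc; pose proof HD.
  assert (0 < 2 * s / (c * D)) by (apply Rdiv_lt_0_compat; nra).
  replace (-2 * s / (c * D)) with (- (2 * s / (c * D))) by (field; split; lra). lra.
Qed.

Lemma Bf3 : th_of u ^ 2 * Rabs (F3 u) <= 10.
Proof.
  rewrite Hth. unfold F3. fold s c D.
  pose proof Hs; pose proof Hc; pose proof HD; pose proof HP; pose proof HPD; pose proof Hs3.
  replace ((P / s) ^ 2 * Rabs (2 * s ^ 2 * (2 * s ^ 3 * c - D) / (c ^ 2 * D ^ 3)))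
    with (Rabs (2 * P ^ 2 * (2 * s ^ 3 * c - D) / (c ^ 2 * D ^ 3))).
  2: { rewrite <- (Rabs_pos_eq ((P/s)^2)) by (apply pow2_ge_0).
       rewrite <- Rabs_mult. f_equal. field. repeat split; lra. }
  rewrite Rabs_div by nz. rewrite (Rabs_pos_eq (c ^ 2 * D ^ 3)) by (apply Rlt_le; posprod).
  apply (Rmult_le_reg_r (c ^ 2 * D ^ 3)). posprod.
  unfold Rdiv. rewrite Rmult_assoc, Rinv_l by nz.
  assert (Rabs (2 * P ^ 2 * (2 * s ^ 3 * c - D)) <= 2 * P ^ 2 * (2 * s ^ 3 * c + D)).
  { rewrite Rabs_mult. rewrite (Rabs_pos_eq (2 * P ^ 2)) by nra.
    apply Rmult_le_compat_l; [nra|]. apply Rabs_le. assert (0 <= s^3*c) by (apply Rmult_le_pos; [apply pow_le|]; lra). split; lra. }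
  assert (P ^ 2 <= D ^ 2) by nra.
  assert (2 * P ^ 2 * (2 * s ^ 3 * c + D) <= 2 * D ^ 2 * (2 * (2 * c * D) * c + D)).
  { assert (0 <= s^3*c) by (apply Rmult_le_pos; [apply pow_le|]; lra).
    assert (s ^ 3 * c <= 2 * c * D * c) by (apply Rmult_le_compat_r; lra).
    assert (0 <= P^2) by apply pow2_ge_0. apply Rmult_le_compat; lra. }
  assert (2 * D ^ 2 * (2 * (2 * c * D) * c + D) <= 10 * (c ^ 2 * D ^ 3)).
  { assert (1 <= c^2) by nra. assert (0 < D^3) by (apply pow_lt; lra).
    assert (D ^ 3 <= c^2 * D ^ 3) by nra.
    replace (2 * D ^ 2 * (2 * (2 * c * D) * c + D)) with (8 * (c^2 * D^3) + 2 * D^3) by ring. lra. }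
  lra.
Qed.

Lemma HuS2 : u * s ^ 2 / D <= 2 * (u + 1).
Proof.
  pose proof Hs; pose proof Hc; pose proof HD; pose proof Hs3; pose proof Hth_le.
  apply (Rmult_le_reg_r D); auto. unfold Rdiv. rewrite Rmult_assoc, Rinv_l by nz.
  (* u s^2 <= 2 u c D / s = 2 (P/s + 1) D *)
  assert (u * c / s = P / s + 1) by (unfold P; fold s c; field; lra).
  assert (u * s ^ 2 * s <= 2 * u * c * D) by nra.
  assert (u * s ^ 2 <= 2 * (u * c / s) * D).
  { apply (Rmult_le_reg_r s); auto. unfold Rdiv. replace (2 * (u * c * / s) * D * s) with (2 * u * c * D) by (field; lra). nra. }
  nra.
Qed.

Lemma HQ : Rabs (QQ u) <= 2 * u * s ^ 2 + D.
Proof.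
  assert (QQ u + D = 2 * u * s ^ 2). { unfold QQ, D, DD. fold s c. pose proof Hcs. nra. }
  pose proof (QQ_pos u Hu). rewrite Rabs_pos_eq by lra. pose proof HD. lra.
Qed.

Lemma Bj1 : th_of u * Rabs (J1 u) <= 2 * u + 3.
Proof.
  rewrite Hth. unfold J1. fold s c D.
  pose proof Hs; pose proof Hc; pose proof HD; pose proof HP; pose proof HPD; pose proof HQ; pose proof HuS2.
  replace (P / s * Rabs (- QQ u * s / (2 * c * D ^ 2))) with (P * Rabs (QQ u) / (2 * c * D ^ 2)).
  2: { rewrite Rabs_div by nz. rewrite (Rabs_pos_eq (2 * c * D ^ 2)) by (apply Rlt_le; posprod).
       rewrite Rabs_mult, Rabs_Ropp, (Rabs_pos_eq s) by lra. field. repeat split; lra. }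
  apply (Rmult_le_reg_r (2 * c * D ^ 2)). posprod.
  unfold Rdiv. rewrite Rmult_assoc, Rinv_l by nz.
  assert (u * s ^ 2 <= 2 * (u + 1) * D).
  { assert (E7 : u*s^2 = (u*s^2/D)*D) by (field; lra). rewrite E7. apply Rmult_le_compat_r; lra. }
  assert (P * Rabs (QQ u) <= D * (2 * u * s ^ 2 + D)) by (apply Rmult_le_compat; try lra; apply Rabs_pos).
  assert (D * (2 * u * s ^ 2 + D) <= D^2 * (4*u+5)) by nra.
  assert (D^2 * (4*u+5) <= (2*u+3) * (2*c*D^2)).
  { assert (0 < D^2) by (apply pow_lt; lra). assert (4*u+5 <= (2*u+3)*(2*c)) by nra.
    replace ((2*u+3) * (2*c*D^2)) with (D^2 * ((2*u+3)*(2*c))) by ring. apply Rmult_le_compat_l; lra. }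
  lra.
Qed.

Lemma Bj2 : th_of u ^ 2 * Rabs (J2 u) <= 30 * (u + 1).
Proof.
  rewrite Hth. unfold J2. fold s c D.
  pose proof Hs; pose proof Hc; pose proof HD; pose proof HP; pose proof HPD; pose proof HQ; pose proof HuS2; pose proof Hs3.
  set (q := QQ u) in *.
  assert (Hq : u * s ^ 2 <= 2 * (u + 1) * D).
  { assert (E7 : u*s^2 = (u*s^2/D)*D) by (field; lra). rewrite E7. apply Rmult_le_compat_r; lra. }
  replace ((P / s) ^ 2 * Rabs (- / 2 * (4 * u * s ^ 2 / D ^ 2 + q / (c ^ 2 * D ^ 2) - 4 * q * s ^ 3 / (c * D ^ 3)) * (s ^ 2 / D)))
   with (/ 2 * (P ^ 2 / D ^ 2) * Rabs (- (4 * u * s ^ 2 / D + q / (c ^ 2 * D) - 4 * q * (s ^ 3 / (c * D)) / D))).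
  2: { rewrite <- (Rabs_pos_eq ((P/s)^2)) by (apply pow2_ge_0).
       rewrite <- (Rabs_pos_eq (/ 2 * (P ^ 2 / D ^ 2))) by (apply Rlt_le; apply Rmult_lt_0_compat; [lra|apply Rdiv_lt_0_compat; nra]).
       rewrite <- !Rabs_mult. f_equal. field. repeat split; lra. }
  rewrite Rabs_Ropp.
  assert (HPD2 : P ^ 2 / D ^ 2 <= 1).
  { apply (Rmult_le_reg_r (D ^ 2)). nra. unfold Rdiv. rewrite Rmult_assoc, Rinv_l by nz. nra. }
  assert (Hs3' : s ^ 3 / (c * D) <= 2).
  { apply (Rmult_le_reg_r (c * D)). nra. unfold Rdiv. rewrite Rmult_assoc, Rinv_l by nz. nra. }
  assert (Hs3p : 0 <= s ^ 3 / (c * D)) by (apply Rlt_le, Rdiv_lt_0_compat; posprod).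
  assert (Hqd : Rabs q / D <= 4 * (u + 1) + 1).
  { apply (Rmult_le_reg_r D); auto. unfold Rdiv. rewrite Rmult_assoc, Rinv_l by nz. nra. }
  assert (Habs : Rabs (4 * u * s ^ 2 / D + q / (c ^ 2 * D) - 4 * q * (s ^ 3 / (c * D)) / D)
            <= 4 * (u * s ^ 2 / D) + Rabs q / D + 4 * (Rabs q / D) * 2).
  { eapply Rle_trans. apply Rabs_triang. rewrite Rabs_Ropp.
    eapply Rle_trans. apply Rplus_le_compat_r. apply Rabs_triang.
    assert (E1 : Rabs (4 * u * s ^ 2 / D) = 4 * (u * s ^ 2 / D)).
    { rewrite Rabs_pos_eq. field; lra. apply Rlt_le. apply Rdiv_lt_0_compat; [|lra]. posprod. }
    assert (E2 : Rabs (q / (c ^ 2 * D)) <= Rabs q / D).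
    { rewrite Rabs_div by nz. rewrite (Rabs_pos_eq (c^2 * D)) by (apply Rlt_le; posprod).
      unfold Rdiv. apply Rmult_le_compat_l. apply Rabs_pos.
      apply Rinv_le_contravar; auto. assert (1 <= c ^ 2) by nra. nra. }
    assert (E3 : Rabs (4 * q * (s ^ 3 / (c * D)) / D) <= 4 * (Rabs q / D) * 2).
    { rewrite Rabs_div by nz. rewrite (Rabs_pos_eq D) by lra. rewrite !Rabs_mult.
      rewrite (Rabs_pos_eq 4) by lra. rewrite (Rabs_pos_eq (s ^ 3 / (c * D))) by lra.
      assert (0 <= Rabs q / D) by (apply Rmult_le_pos; [apply Rabs_pos | apply Rlt_le, Rinv_0_lt_compat; lra]).
      replace (4 * Rabs q * (s ^ 3 / (c * D)) / D) with (4 * (Rabs q / D) * (s ^ 3 / (c * D))) by (field; lra).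
      apply Rmult_le_compat_l; [lra|]. exact Hs3'. }
    lra. }
  assert (0 <= P ^ 2 / D ^ 2) by (apply Rlt_le, Rdiv_lt_0_compat; posprod).
  set (R0 := Rabs (4 * u * s ^ 2 / D + q / (c ^ 2 * D) - 4 * q * (s ^ 3 / (c * D)) / D)) in *.
  assert (R0 <= 60 * (u + 1)) by lra.
  assert (0 <= R0) by apply Rabs_pos.
  assert (P ^ 2 / D ^ 2 * R0 <= 1 * (60 * (u + 1))) by (apply Rmult_le_compat; lra).
  lra.
Qed.

Lemma Blam : / (4 * c ^ 2) <= exp (- (2 * u)).
Proof.
  pose proof Hc. rewrite exp_Ropp. apply Rinv_le_contravar. apply exp_pos.
  replace (2 * u) with (u + u) by ring. rewrite exp_plus.
  assert (exp u <= 2 * c) by (unfold c, cosh; pose proof (exp_pos (-u)); lra).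
  pose proof (exp_pos u). nra.
Qed.

End Bounds.

Lemma alpha_eq (n g : nat) : (2 <= n)%nat -> (1 <= g)%nat ->
  alpha n g = 2 * (2 * INR n - 1) / (INR n + 1) *
    exp ((2 * INR g - 2) * ln ((INR n - 1) / INR n)
         + ((INR n - 1) * fF (INR g / (INR n - 1)) + jF (INR g / (INR n - 1)))
         - (INR n * fF (INR g / INR n) + jF (INR g / INR n))).
Proof.
  intros Hn Hg.
  assert (HN : 2 <= INR n) by (apply (le_INR 2); auto).
  assert (HG : 1 <= INR g) by (apply (le_INR 1); auto).
  assert (Hn1 : INR (n - 1) = INR n - 1) by (rewrite minus_INR by lia; simpl; ring).
  assert (Hk : INR (2 * g - 2) = 2 * INR g - 2) by (rewrite minus_INR by lia; rewrite mult_INR; simpl; ring).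
  unfold alpha, Omega. rewrite Hn1.
  set (K := sqrt (INR g) * INR g ^ g / (sqrt (2 * PI) * exp (INR g) * INR (Stdlib.Arith.Factorial.fact g))).
  assert (HK : 0 < K).
  { unfold K. apply Rdiv_lt_0_compat.
    - apply Rmult_lt_0_compat. apply sqrt_lt_R0; lra. apply pow_lt; lra.
    - apply Rmult_lt_0_compat. apply Rmult_lt_0_compat. apply sqrt_lt_R0. pose proof PI_RGT_0; lra.
      apply exp_pos. apply lt_0_INR. apply Factorial.lt_O_fact. }
  set (k := (2 * g - 2)%nat) in *.
  assert (E1 : (INR n - 1) ^ k = exp (INR k * ln (INR n - 1))).
  { rewrite <- Rpower_pow by lra. reflexivity. }
  assert (E2 : INR n ^ k = exp (INR k * ln (INR n))).
  { rewrite <- Rpower_pow by lra. reflexivity. }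
  rewrite E1, E2, Hk.
  set (a1 := (INR n - 1) * fF (INR g / (INR n - 1)) + jF (INR g / (INR n - 1))).
  set (a0 := INR n * fF (INR g / INR n) + jF (INR g / INR n)).
  rewrite ln_div by lra.
  replace ((2 * INR g - 2) * (ln (INR n - 1) - ln (INR n)) + a1 - a0)
    with (((2 * INR g - 2) * ln (INR n - 1) + a1) - ((2 * INR g - 2) * ln (INR n) + a0)) by ring.
  set (X := (2 * INR g - 2) * ln (INR n - 1) + a1). set (Y := (2 * INR g - 2) * ln (INR n) + a0).
  replace (exp (X - Y)) with (exp X * / exp Y) by (unfold Rminus; rewrite exp_plus, exp_Ropp; reflexivity).
  unfold X, Y. rewrite !exp_plus.
  pose proof (exp_pos ((2 * INR g - 2) * ln (INR n))). pose proof (exp_pos a0).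
  field. repeat split; try lra.
Qed.

Lemma ln_up y : 0 <= y <= 1/2 -> ln (1 - y) <= - y - y ^ 2 / 2.
Proof.
  intro Hy.
  enough (0 <= - y - y ^ 2 / 2 - ln (1 - y)) by lra.
  replace 0 with ((fun x => - x - x ^ 2 / 2 - ln (1 - x)) 0) by (rewrite Rminus_0_r, ln_1; field).
  apply (nondecr_of_deriv (fun x => - x - x ^ 2 / 2 - ln (1 - x)) (fun x => x ^ 2 / (1 - x))); [lra| |].
  - intros x Hx. auto_derive. lra. field. lra.
  - intros x Hx. apply Rmult_le_pos. apply pow2_ge_0. apply Rlt_le, Rinv_0_lt_compat. lra.
Qed.

Lemma ln_lo y : 0 <= y <= 1/2 -> - y - y ^ 2 / 2 - y ^ 3 <= ln (1 - y).
Proof.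
  intro Hy.
  enough (0 <= ln (1 - y) + y + y ^ 2 / 2 + y ^ 3) by lra.
  replace 0 with ((fun x => ln (1 - x) + x + x ^ 2 / 2 + x ^ 3) 0) by (rewrite Rminus_0_r, ln_1; field).
  apply (nondecr_of_deriv (fun x => ln (1 - x) + x + x ^ 2 / 2 + x ^ 3) (fun x => x ^ 2 * (2 - 3 * x) / (1 - x))); [lra| |].
  - intros x Hx. auto_derive. lra. field. lra.
  - intros x Hx. apply Rmult_le_pos. apply Rmult_le_pos. apply pow2_ge_0. lra. apply Rlt_le, Rinv_0_lt_compat. lra.
Qed.

Lemma exp2_le9 z : z <= 2 -> exp z <= 9.
Proof.
  intro Hz. assert (exp z <= exp 2) by (destruct (Req_dec z 2) as [->|h]; [lra| apply Rlt_le, exp_increasing; lra]).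
  replace 2 with (1 + 1) in H by ring. rewrite exp_plus in H. pose proof exp_le_3. pose proof (exp_pos 1). nra.
Qed.

Lemma exp_rem z : z <= 2 -> Rabs (exp z - 1 - z) <= 5 * z ^ 2.
Proof.
  intro Hz. pose proof (exp_ineq1_le z). rewrite Rabs_pos_eq by lra.
  set (h := fun x => 5 * x ^ 2 - (exp x - 1 - x)).
  set (h1 := fun x => 10 * x - exp x + 1).
  assert (Dh : forall x, is_derive h x (h1 x)).
  { intro x. unfold h, h1. auto_derive; auto. ring. }
  assert (Dh1 : forall x, is_derive h1 x (10 - exp x)).
  { intro x. unfold h1. auto_derive; auto. ring. }
  assert (H0 : h 0 = 0) by (unfold h; rewrite exp_0; ring).
  assert (H10 : h1 0 = 0) by (unfold h1; rewrite exp_0; ring).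
  enough (0 <= h z) by (unfold h in H1; lra).
  destruct (Rle_dec 0 z) as [Hp|Hn].
  - rewrite <- H0. apply (nondecr_of_deriv h h1); auto.
    intros x Hx. rewrite <- H10. apply (nondecr_of_deriv h1 (fun x => 10 - exp x)); [lra|auto|].
    intros y Hy. pose proof (exp2_le9 y ltac:(lra)). lra.
  - assert (Hg : (fun x => - h x) z <= (fun x => - h x) 0).
    { apply (nondecr_of_deriv (fun x => - h x) (fun x => - h1 x)); [lra| |].
      + intros x Hx. apply (is_derive_opp h). auto.
      + intros x Hx. enough (h1 x <= h1 0) by lra.
        apply (nondecr_of_deriv h1 (fun x => 10 - exp x)); [lra|auto|].
        intros y Hy. pose proof (exp2_le9 y ltac:(lra)). lra. }
    cbv beta in Hg. lra.
Qed.

Lemma poly_exp u : 0 <= u -> (1 + u) ^ 4 * exp (- (2 * u)) <= 16.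
Proof.
  intro Hu. pose proof (exp_ineq1_le (u / 2)).
  assert (E : exp (2 * u) = exp (u / 2) ^ 4).
  { simpl. rewrite Rmult_1_r, <- !exp_plus. f_equal. field. }
  assert ((1 + u / 2) ^ 4 <= exp (2 * u)).
  { rewrite E. apply pow_incr. lra. }
  assert ((1 + u) ^ 4 <= 16 * (1 + u / 2) ^ 4).
  { replace (16 * (1 + u / 2) ^ 4) with ((2 + u) ^ 4) by (simpl; field). apply pow_incr. lra. }
  rewrite exp_Ropp. pose proof (exp_pos (2 * u)).
  apply (Rmult_le_reg_r (exp (2 * u))); auto. rewrite Rmult_assoc, Rinv_l by lra. nra.
Qed.

Lemma assemble (N t lam0 f f1 f2 F3z j j1 J2z F2z J1z l ft1 jt1 : R) :
  2 <= N -> 0 < t -> 1 <= t * N -> 0 < lam0 -> lam0 * (1 + t) ^ 4 <= 16 ->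
  - (/ N) - (/ N) ^ 2 / 2 - (/ N) ^ 3 <= l -> l <= - (/ N) - (/ N) ^ 2 / 2 ->
  t * f1 - f - 2 * t = ln lam0 ->
  t ^ 2 * Rabs f2 <= 2 -> t * Rabs j1 <= 2 * t + 5 ->
  t ^ 2 * Rabs F3z <= 10 -> t ^ 2 * Rabs J2z <= 60 * (t + 1) -> F2z <= 0 -> J1z <= 0 ->
  ft1 = f + t / (N - 1) * f1 + (t / (N - 1)) ^ 2 / 2 * f2 + (t / (N - 1)) ^ 3 / 6 * F3z ->
  ft1 = f + t / (N - 1) * f1 + (t / (N - 1)) ^ 2 / 2 * F2z ->
  jt1 = j + t / (N - 1) * j1 + (t / (N - 1)) ^ 2 / 2 * J2z ->
  jt1 = j + t / (N - 1) * J1z ->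
  Rabs (2 * (2 * N - 1) / (N + 1) * exp ((2 * (t * N) - 2) * l + ((N - 1) * ft1 + jt1) - (N * f + j))
        - 4 * lam0 - 4 * lam0 / N * (/ 2 - t + t ^ 2 / 2 * f2 + t * j1))
   <= 4000000 / (N ^ 2 * (1 + t) ^ 2).
Proof.
  intros HN Ht HtN Hl Hlt Hl1 Hl2 Hid Bf2 Bj1 Bf3 Bj2 HF2 HJ1 Ef1 Ef2 Ej1 Ej2.
  set (z := (2 * (t * N) - 2) * l + ((N - 1) * ft1 + jt1) - (N * f + j) - ln lam0).
  assert (Ez : (2 * (t * N) - 2) * l + ((N - 1) * ft1 + jt1) - (N * f + j) = z + ln lam0) by (unfold z; ring).
  rewrite Ez, exp_plus, exp_ln by auto.
  set (B := t ^ 2 * f2 / 2 - t + 2 + t * j1).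
  set (E := z - B / N).
  set (y := / N) in *.
  assert (Hy : 0 < y <= 1 / 2).
  { unfold y. split. apply Rinv_0_lt_compat; lra. 
    apply (Rmult_le_reg_r N); [lra|]. rewrite Rinv_l by lra. lra. }
  assert (HNy : N * y = 1) by (unfold y; field; lra).
  set (k := 2 * (t * N) - 2).
  assert (Hk : 0 <= k) by (unfold k; lra).
  set (r := - l - y - y ^ 2 / 2).
  assert (Hr : 0 <= r <= y ^ 3) by (unfold r; lra).
  set (T1 := y ^ 2 - k * r).
  set (T2 := (t ^ 2 * f2 / 2 + t * j1) * (y * (/ (N - 1)))).
  set (T3 := t * (t / (N - 1)) ^ 2 * F3z / 6).
  set (T4 := (t / (N - 1)) ^ 2 * J2z / 2).
  assert (EE : E = T1 + T2 + T3 + T4).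
  { unfold E, T1, T2, T3, T4, r, z, B, k. rewrite Ef1, Ej1.
    assert (f = t * f1 - 2 * t - ln lam0) by lra. rewrite H.
    unfold y. field. lra. }
  set (w := / (N - 1)) in *.
  assert (Hw : 0 < w <= 2 * y).
  { assert (0 < w) by (unfold w; apply Rinv_0_lt_compat; lra).
    split; auto.
    assert (w * (N-1) = 1) by (unfold w; field; lra).
    apply (Rmult_le_reg_r (N - 1)); [lra|]. nra. }
  assert (Htw : t / (N - 1) = t * w) by (unfold w; field; lra).
  assert (Hy2 : 0 < y ^ 2) by (apply pow_lt; lra).
  assert (BT1 : Rabs T1 <= (1 + 2 * t) * y ^ 2).
  { unfold T1. assert (0 <= k * r) by (apply Rmult_le_pos; lra).
    assert (k * r <= 2 * t * y ^ 2).
    { assert (k <= 2 * (t * N)) by (unfold k; lra).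
      assert (k * r <= (2 * (t * N)) * y ^ 3) by (apply Rmult_le_compat; lra).
      replace ((2 * (t * N)) * y ^ 3) with (2 * t * (N * y) * y ^ 2) in H1 by field.
      rewrite HNy in H1. lra. }
    apply Rabs_le. split; nra. }
  assert (Hg1 : Rabs (t ^ 2 * f2 / 2 + t * j1) <= 2 * t + 6).
  { eapply Rle_trans. apply Rabs_triang.
    rewrite Rabs_mult, (Rabs_pos_eq t) by lra.
    unfold Rdiv. rewrite Rabs_mult, (Rabs_pos_eq (/2)) by lra.
    rewrite Rabs_mult, (Rabs_pos_eq (t^2)) by (apply pow2_ge_0). lra. }
  assert (BT2 : Rabs T2 <= 2 * (2 * t + 6) * y ^ 2).
  { unfold T2. rewrite Rabs_mult. rewrite (Rabs_pos_eq (y * w)) by (apply Rmult_le_pos; lra).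
    assert (y * w <= 2 * y ^ 2) by nra.
    assert (0 <= Rabs (t ^ 2 * f2 / 2 + t * j1)) by apply Rabs_pos.
    assert (0 <= y * w) by (apply Rmult_le_pos; lra).
    assert (Rabs (t ^ 2 * f2 / 2 + t * j1) * (y * w) <= (2 * t + 6) * (2 * y ^ 2)) by (apply Rmult_le_compat; lra).
    lra. }
  assert (Hw2 : w ^ 2 <= 4 * y ^ 2) by nra.
  assert (BT3 : Rabs T3 <= 7 * t * y ^ 2).
  { unfold T3. rewrite Htw.
    replace (t * (t * w) ^ 2 * F3z / 6) with ((t ^ 2 * F3z) * (t * w ^ 2 / 6)) by field.
    rewrite Rabs_mult, (Rabs_pos_eq (t * w ^ 2 / 6)) by (apply Rlt_le; unfold Rdiv; posprod).
    rewrite Rabs_mult, (Rabs_pos_eq (t ^ 2)) by apply pow2_ge_0.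
    assert (t ^ 2 * Rabs F3z * (t * w ^ 2 / 6) <= 10 * (t * (4 * y ^ 2) / 6)).
    { apply Rmult_le_compat; try lra. apply Rmult_le_pos; [apply pow2_ge_0|apply Rabs_pos].
      apply Rlt_le; unfold Rdiv; posprod.
      unfold Rdiv. apply Rmult_le_compat_r; [lra|]. apply Rmult_le_compat_l; lra. }
    assert (0 <= t * y ^ 2) by (apply Rmult_le_pos; lra). lra. }
  assert (BT4 : Rabs T4 <= 120 * (t + 1) * y ^ 2).
  { unfold T4. rewrite Htw.
    replace ((t * w) ^ 2 * J2z / 2) with ((t ^ 2 * J2z) * (w ^ 2 / 2)) by field.
    rewrite Rabs_mult, (Rabs_pos_eq (w ^ 2 / 2)) by (apply Rlt_le; unfold Rdiv; posprod).
    rewrite Rabs_mult, (Rabs_pos_eq (t ^ 2)) by apply pow2_ge_0.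
    assert (t ^ 2 * Rabs J2z * (w ^ 2 / 2) <= (60 * (t + 1)) * (4 * y ^ 2 / 2)).
    { apply Rmult_le_compat; try lra. apply Rmult_le_pos; [apply pow2_ge_0|apply Rabs_pos].
      apply Rlt_le; unfold Rdiv; posprod. }
    lra. }
  assert (BE : Rabs E <= 140 * (1 + t) * y ^ 2).
  { rewrite EE. 
    assert (Rabs (T1 + T2 + T3 + T4) <= Rabs T1 + Rabs T2 + Rabs T3 + Rabs T4).
    { eapply Rle_trans. apply Rabs_triang. 
      assert (Rabs (T1 + T2 + T3) <= Rabs T1 + Rabs T2 + Rabs T3).
      { eapply Rle_trans. apply Rabs_triang. pose proof (Rabs_triang T1 T2). lra. }
      lra. }
    assert (Rabs T1 + Rabs T2 + Rabs T3 + Rabs T4 <= 140 * (1 + t) * y ^ 2).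
    { assert ((1 + 2 * t) * y ^ 2 + 2 * (2 * t + 6) * y ^ 2 + 7 * t * y ^ 2 + 120 * (t + 1) * y ^ 2
              <= 140 * (1 + t) * y ^ 2) by nra. lra. }
    lra. }
  assert (Hzup : z <= 2).
  { assert (Ez2 : z = k * l + 2 * t + t * (t * w) * F2z / 2 + t * w * J1z).
    { unfold z, k. rewrite Ef2, Ej2. rewrite Htw.
      assert (f = t * f1 - 2 * t - ln lam0) by lra. rewrite H.
      unfold w. field. lra. }
    assert (t * (t * w) * F2z / 2 <= 0).
    { assert (0 <= t * (t * w) / 2) by (apply Rlt_le; unfold Rdiv; posprod). nra. }
    assert (t * w * J1z <= 0).
    { assert (0 <= t * w) by (apply Rlt_le; posprod). nra. }
    assert (k * l <= k * (- y - y ^ 2 / 2)) by (apply Rmult_le_compat_l; lra).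
    assert (k * (- y - y ^ 2 / 2) + 2 * t = -(N * y - 1) * (2 * t + t * y) + (2 * y - t * y + y ^ 2))
      by (unfold k; field).
    rewrite HNy in H2.
    assert (0 <= t * y) by (apply Rmult_le_pos; lra).
    assert (y ^ 2 <= 1/4) by nra.
    lra. }
  assert (BB : Rabs B <= 3 * t + 8).
  { unfold B. replace (t ^ 2 * f2 / 2 - t + 2 + t * j1) with ((t ^ 2 * f2 / 2 + t * j1) + (2 - t)) by field.
    eapply Rle_trans. apply Rabs_triang. assert (Rabs (2 - t) <= 2 + t) by (apply Rabs_le; split; lra). lra. }
  assert (Ezz : z = B * y + E) by (unfold E, y; field; lra).
  assert (Bz : Rabs z <= 80 * (1 + t) * y).
  { rewrite Ezz. eapply Rle_trans. apply Rabs_triang. rewrite Rabs_mult, (Rabs_pos_eq y) by lra.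
    assert (Rabs B * y <= (3 * t + 8) * y) by (apply Rmult_le_compat_r; lra).
    assert (140 * (1 + t) * y ^ 2 <= 70 * (1 + t) * y).
    { assert (0 <= (1 + t) * y) by (apply Rmult_le_pos; lra). nra. }
    assert (0 <= t * y) by (apply Rmult_le_pos; lra). lra. }
  set (rho := exp z - 1 - z).
  assert (Brho : Rabs rho <= 5 * z ^ 2) by (apply exp_rem; auto).
  set (v := / (N + 1)).
  assert (Hv : 0 < v <= y).
  { unfold v, y. split. apply Rinv_0_lt_compat; lra. apply Rinv_le_contravar; lra. }
  set (X := 4 * E + 4 * rho + 6 * y * v - 6 * v * (z + rho)).
  assert (EX : 2 * (2 * N - 1) / (N + 1) * (exp z * lam0) - 4 * lam0 - 4 * lam0 / N * (/ 2 - t + t ^ 2 / 2 * f2 + t * j1)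
               = lam0 * X).
  { replace (exp z) with (1 + z + rho) by (unfold rho; ring).
    unfold X, E, B, v, y. field. lra. }
  rewrite EX, Rabs_mult, (Rabs_pos_eq lam0) by lra.
  assert (Hz2 : z ^ 2 <= 6400 * ((1 + t) ^ 2 * y ^ 2)).
  { assert (Rabs z ^ 2 <= (80 * (1 + t) * y) ^ 2) by (apply pow_incr; split; [apply Rabs_pos|auto]).
    rewrite <- (pow2_abs z). replace (6400 * ((1 + t) ^ 2 * y ^ 2)) with ((80 * (1 + t) * y) ^ 2) by field. auto. }
  assert (BX : Rabs X <= 226000 * ((1 + t) ^ 2 * y ^ 2)).
  { assert (Rabs X <= 4 * Rabs E + 4 * Rabs rho + 6 * y * v + 6 * v * (Rabs z + Rabs rho)).
    { unfold X. 
      assert (Rabs (6 * v * (z + rho)) <= 6 * v * (Rabs z + Rabs rho)).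
      { rewrite Rabs_mult, (Rabs_pos_eq (6 * v)) by lra. apply Rmult_le_compat_l; [lra|]. apply Rabs_triang. }
      assert (Rabs (4 * E) = 4 * Rabs E) by (rewrite Rabs_mult, Rabs_pos_eq; lra).
      assert (Rabs (4 * rho) = 4 * Rabs rho) by (rewrite Rabs_mult, Rabs_pos_eq; lra).
      assert (Rabs (6 * y * v) = 6 * y * v) by (apply Rabs_pos_eq; apply Rlt_le; posprod).
      pose proof (Rabs_triang (4 * E + 4 * rho + 6 * y * v) (- (6 * v * (z + rho)))).
      pose proof (Rabs_triang (4 * E + 4 * rho) (6 * y * v)).
      pose proof (Rabs_triang (4 * E) (4 * rho)).
      rewrite Rabs_Ropp in H3. unfold Rminus. lra. }
    assert (Hty : 0 <= (1 + t) ^ 2 * y ^ 2) by (apply Rmult_le_pos; apply pow2_ge_0).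
    assert (H1t : 1 <= (1 + t) ^ 2) by nra.
    assert (6 * y * v <= 6 * ((1 + t) ^ 2 * y ^ 2)).
    { assert (y * v <= y ^ 2) by nra. assert (y ^ 2 <= (1 + t) ^ 2 * y ^ 2) by nra. lra. }
    assert (v * Rabs z <= 80 * ((1 + t) ^ 2 * y ^ 2)).
    { assert (v * Rabs z <= y * (80 * (1 + t) * y)) by (apply Rmult_le_compat; try lra; apply Rabs_pos).
      assert ((1 + t) * y ^ 2 <= (1 + t) ^ 2 * y ^ 2) by nra. nra. }
    assert (v * Rabs rho <= 5 * z ^ 2 / 2).
    { assert (v * Rabs rho <= (1 / 2) * (5 * z ^ 2)) by (apply Rmult_le_compat; try lra; apply Rabs_pos). lra. }
    assert (Rabs E <= 140 * ((1 + t) ^ 2 * y ^ 2)).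
    { assert ((1 + t) * y ^ 2 <= (1 + t) ^ 2 * y ^ 2) by nra. nra. }
    nra. }
  assert (Hl2' : lam0 * (1 + t) ^ 2 <= 16 / (1 + t) ^ 2).
  { assert (0 < (1 + t) ^ 2) by (apply pow_lt; lra).
    apply (Rmult_le_reg_r ((1 + t) ^ 2)); auto.
    replace (16 / (1 + t) ^ 2 * (1 + t) ^ 2) with 16 by (field; lra).
    replace (lam0 * (1 + t) ^ 2 * (1 + t) ^ 2) with (lam0 * (1 + t) ^ 4) by field. lra. }
  assert (lam0 * Rabs X <= lam0 * (226000 * ((1 + t) ^ 2 * y ^ 2))) by (apply Rmult_le_compat_l; lra).
  assert (lam0 * (226000 * ((1 + t) ^ 2 * y ^ 2)) <= 226000 * (16 / (1 + t) ^ 2) * y ^ 2).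
  { replace (lam0 * (226000 * ((1 + t) ^ 2 * y ^ 2))) with (226000 * (lam0 * (1 + t) ^ 2) * y ^ 2) by field.
    apply Rmult_le_compat_r; [lra|]. apply Rmult_le_compat_l; lra. }
  assert (226000 * (16 / (1 + t) ^ 2) * y ^ 2 <= 4000000 / (N ^ 2 * (1 + t) ^ 2)).
  { unfold y. replace (226000 * (16 / (1 + t) ^ 2) * (/ N) ^ 2) with (3616000 / (N ^ 2 * (1 + t) ^ 2)) by (field; lra).
    unfold Rdiv. apply Rmult_le_compat_r; [|lra]. apply Rlt_le, Rinv_0_lt_compat. apply Rmult_lt_0_compat; apply pow_lt; lra. }
  lra.
Qed.

Lemma taylor3 f x y : x < y ->
  (forall t, x <= t <= y -> forall k, (k <= 3)%nat -> ex_derive_n f k t) ->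
  exists z, x < z < y /\ f y = f x + (y - x) * Derive_n f 1 x + (y - x) ^ 2 / 2 * Derive_n f 2 x
                               + (y - x) ^ 3 / 6 * Derive_n f 3 z.
Proof.
  intros H H0. destruct (Taylor_Lagrange f 2 x y H H0) as [z [Hz E]].
  exists z. split; auto. rewrite E. cbn [sum_f_R0]. change (Derive_n f 0 x) with (f x).
  replace (INR (Factorial.fact 0)) with 1 by (simpl; lra).
  replace (INR (Factorial.fact 1)) with 1 by (simpl; lra).
  replace (INR (Factorial.fact 2)) with 2 by (simpl; lra).
  replace (INR (Factorial.fact 3)) with 6 by (simpl; lra).
  field.
Qed.

Lemma taylor2 f x y : x < y ->
  (forall t, x <= t <= y -> forall k, (k <= 2)%nat -> ex_derive_n f k t) ->
  exists z, x < z < y /\ f y = f x + (y - x) * Derive_n f 1 x + (y - x) ^ 2 / 2 * Derive_n f 2 z.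
Proof.
  intros H H0. destruct (Taylor_Lagrange f 1 x y H H0) as [z [Hz E]].
  exists z. split; auto. rewrite E. cbn [sum_f_R0]. change (Derive_n f 0 x) with (f x).
  replace (INR (Factorial.fact 0)) with 1 by (simpl; lra).
  replace (INR (Factorial.fact 1)) with 1 by (simpl; lra).
  replace (INR (Factorial.fact 2)) with 2 by (simpl; lra).
  field.
Qed.

Lemma taylor1 f x y : x < y ->
  (forall t, x <= t <= y -> forall k, (k <= 1)%nat -> ex_derive_n f k t) ->
  exists z, x < z < y /\ f y = f x + (y - x) * Derive_n f 1 z.
Proof.
  intros H H0. destruct (Taylor_Lagrange f 0 x y H H0) as [z [Hz E]].
  exists z. split; auto. rewrite E. cbn [sum_f_R0]. change (Derive_n f 0 x) with (f x).
  replace (INR (Factorial.fact 0)) with 1 by (simpl; lra).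
  replace (INR (Factorial.fact 1)) with 1 by (simpl; lra).
  field.
Qed.

Lemma J1_neg u : 0 < u -> J1 u < 0.
Proof.
  intro Hu. unfold J1. pose proof (QQ_pos u Hu). pose proof (sinh_pos u Hu).
  pose proof (cosh_gt1 u ltac:(lra)). pose proof (D_pos u Hu).
  assert (0 < QQ u * sinh u / (2 * cosh u * DD u ^ 2)).
  { apply Rdiv_lt_0_compat. posprod. unfold DD. posprod. }
  replace (- QQ u * sinh u / (2 * cosh u * DD u ^ 2)) with (- (QQ u * sinh u / (2 * cosh u * DD u ^ 2))).
  lra. field. unfold DD. split; nz.
Qed.

Theorem lemma4 :
  exists C : R, 0 < C /\
  forall n g : nat, (2 <= n)%nat -> (1 <= g)%nat ->
    let th := INR g / INR n in
    let x := INR n + INR g in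
    Rpower x (- (2 / 3)) <= th ->
    Rabs (alpha n g - 4 * lam th
          - 4 * lam th / INR n
            * (/ 2 - th + th ^ 2 / 2 * Derive_n fF 2 th + th * Derive jF th))
    <= C / x ^ 2.
Proof.
  exists 4000000. split; [lra|].
  intros n g Hn Hg th x _.
  rewrite (alpha_eq n g Hn Hg).
  assert (HN : 2 <= INR n) by (apply (le_INR 2); auto).
  assert (HG : 1 <= INR g) by (apply (le_INR 1); auto).
  set (N := INR n) in *. set (G := INR g) in *.
  assert (Ht : 0 < th) by (unfold th; apply Rdiv_lt_0_compat; lra).
  assert (HGt : G = th * N) by (unfold th; field; lra).
  assert (Hx : x ^ 2 = N ^ 2 * (1 + th) ^ 2) by (unfold x; rewrite HGt; ring).
  rewrite Hx.
  set (t1 := G / (N - 1)).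
  assert (Ht1 : t1 = th + th / (N - 1)) by (unfold t1, th; field; lra).
  assert (Htt1 : th < t1) by (rewrite Ht1; assert (0 < th / (N - 1)) by (apply Rdiv_lt_0_compat; lra); lra).
  assert (Ht12 : t1 <= 2 * th).
  { rewrite Ht1. assert (th / (N - 1) <= th); [|lra].
    apply (Rmult_le_reg_r (N - 1)); [lra|]. unfold Rdiv. rewrite Rmult_assoc, Rinv_l by lra. nra. }
  assert (Hdelta : t1 - th = th / (N - 1)) by lra.
  assert (Hex3 : forall t, th <= t <= t1 -> forall k, (k <= 3)%nat -> ex_derive_n fF k t)
    by (intros; apply fF_exn; auto; lra).
  assert (Hex2 : forall t, th <= t <= t1 -> forall k, (k <= 2)%nat -> ex_derive_n fF k t)
    by (intros; apply fF_exn; auto; lra).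
  assert (Hjx2 : forall t, th <= t <= t1 -> forall k, (k <= 2)%nat -> ex_derive_n jF k t)
    by (intros; apply jF_exn; auto; lra).
  assert (Hjx1 : forall t, th <= t <= t1 -> forall k, (k <= 1)%nat -> ex_derive_n jF k t)
    by (intros; apply jF_exn; auto; lra).
  destruct (taylor3 fF th t1 Htt1 Hex3) as [z1 [Hz1 Ef1]].
  destruct (taylor2 fF th t1 Htt1 Hex2) as [z2 [Hz2 Ef2]].
  destruct (taylor2 jF th t1 Htt1 Hjx2) as [z3 [Hz3 Ej1]].
  destruct (taylor1 jF th t1 Htt1 Hjx1) as [z4 [Hz4 Ej2]].
  rewrite Hdelta in Ef1, Ef2, Ej1, Ej2.
  destruct (U_prop th Ht) as [Hu0 [Hth0 Hlam0]].
  set (u0 := U th) in *.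
  assert (Hl : ln ((N - 1) / N) = ln (1 - / N)) by (f_equal; field; lra).
  assert (Hy : 0 <= / N <= 1 / 2).
  { split. apply Rlt_le, Rinv_0_lt_compat; lra.
    apply (Rmult_le_reg_r N); [lra|]. rewrite Rinv_l by lra. lra. }
  replace (2 * G - 2) with (2 * (th * N) - 2) by (rewrite HGt; ring).
  change (Derive jF th) with (Derive_n jF 1 th).
  apply (assemble N th (lam th) (fF th) (Derive_n fF 1 th) (Derive_n fF 2 th) (Derive_n fF 3 z1)
           (jF th) (Derive_n jF 1 th) (Derive_n jF 2 z3) (Derive_n fF 2 z2) (Derive_n jF 1 z4)
           (ln ((N - 1) / N)) (fF t1) (jF t1)); auto.
  - nra.
  - rewrite Hlam0. apply Rinv_0_lt_compat. pose proof (cosh_ge1 u0). nra.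
  - rewrite Hlam0. pose proof (Blam u0 Hu0). pose proof (poly_exp u0 ltac:(lra)).
    pose proof (th_of_le u0 Hu0). rewrite Hth0 in H1.
    assert ((1 + th) ^ 4 <= (1 + u0) ^ 4) by (apply pow_incr; lra).
    assert (0 <= (1 + th) ^ 4) by (apply pow_le; lra).
    assert (0 < / (4 * cosh u0 ^ 2)) by (apply Rinv_0_lt_compat; pose proof (cosh_ge1 u0); nra).
    assert (/ (4 * cosh u0 ^ 2) * (1 + th) ^ 4 <= exp (- (2 * u0)) * (1 + u0) ^ 4)
      by (apply Rmult_le_compat; lra).
    lra.
  - rewrite Hl. apply ln_lo; auto.
  - rewrite Hl. apply ln_up; auto.
  - rewrite fD1 by auto. fold u0. unfold F1. unfold fF. rewrite Hlam0. ring.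
  - rewrite fD2 by auto. fold u0. rewrite <- Hth0 at 1. apply Bf2; auto.
  - rewrite jD1 by auto. fold u0. rewrite <- Hth0 at 1. pose proof (Bj1 u0 Hu0).
    pose proof (th_of_ge u0 Hu0). lra.
  - rewrite fD3 by lra. destruct (U_prop z1 ltac:(lra)) as [Hu1 [Hth1 _]].
    pose proof (Bf3 (U z1) Hu1). rewrite Hth1 in H.
    assert (th ^ 2 <= z1 ^ 2) by (apply pow_incr; lra).
    assert (0 <= Rabs (F3 (U z1))) by apply Rabs_pos.
    assert (th ^ 2 * Rabs (F3 (U z1)) <= z1 ^ 2 * Rabs (F3 (U z1))) by (apply Rmult_le_compat_r; lra).
    lra.
  - rewrite jD2 by lra. destruct (U_prop z3 ltac:(lra)) as [Hu3 [Hth3 _]].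
    pose proof (Bj2 (U z3) Hu3). rewrite Hth3 in H.
    pose proof (th_of_ge (U z3) Hu3). rewrite Hth3 in H0.
    assert (th ^ 2 <= z3 ^ 2) by (apply pow_incr; lra).
    assert (0 <= Rabs (J2 (U z3))) by apply Rabs_pos.
    assert (th ^ 2 * Rabs (J2 (U z3)) <= z3 ^ 2 * Rabs (J2 (U z3))) by (apply Rmult_le_compat_r; lra).
    lra.
  - rewrite fD2 by lra. apply Rlt_le, F2_neg. apply U_prop; lra.
  - rewrite jD1 by lra. apply Rlt_le, J1_neg. apply U_prop; lra.
Qed.
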